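(* Let $m,n,k$ be positive integers, $A\in\mathbb{R}^{m\times n}$, $x^*\in\mathbb{R}^n$ with support $S^*=\{i:x^*_i\neq0\}$ satisfying $1\le|S^*|\le k$, and $y=Ax^*$ (noiseless case, $e=0$). Assume $A$ satisfies the $(2k+1)$-RIP, that $\|A_i\|_2=1$ for every column $A_i$ of $A$, and that there exists $\beta\in(0,1)$ with $$\frac{2k\,\alpha_k^{RIP}\|x^*\|_2}{\min_{i\in S^*}|x^*_i|}\le\beta .$$ Then $x^*$ satisfies $\gamma_k^{RIP}\|e\|_2<\frac{\min_{i\in S^*}|x^*_i|}{2k}-\alpha_k^{RIP}\|x^*\|_2$ (with $e=0$). As a consequence, for the initialization $\mathcal{X}^0=0$ and every $\eta>0$, if SEA is run for $N>\frac{k+1}{1-\beta}$ iterations, then $S^*\subseteq S^{t_{BEST}}$ and $x^{t_{BEST}}=x^*$.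
   Context: For $l\in\{1,\dots,n\}$, the restricted isometry constant $\delta_l$ of $A$ is the smallest $\delta\ge0$ such that $(1-\delta)\|x\|_2^2\le\|Ax\|_2^2\le(1+\delta)\|x\|_2^2$ for all $x\in\mathbb{R}^n$ with at most $l$ nonzero entries; $A$ satisfies the $l$-RIP if $\delta_l<1$. Define $\alpha_k^{RIP}=\delta_{2k+1}\left(1+\frac{\delta_{2k}}{1-\delta_k}\right)$ and $\gamma_k^{RIP}=1+\frac{\delta_{2k+1}\sqrt{1+\delta_k}}{1-\delta_k}$. For $v\in\mathbb{R}^n$, $\mathrm{largest}_k(v)$ is the set of indices of the $k$ entries of $v$ with largest absolute value (ties broken by selecting the highest indices). For $S\subseteq\{1,\dots,n\}$, $A_S$ is the submatrix of columns indexed by $S$, $v_S$ the restriction of a vector to $S$, and $A_S^\dagger$ the Moore–Penrose pseudoinverse of $A_S$. The Support Exploration Algorithm (SEA) with initialization $\mathcal{X}^0$ and step size $\eta>0$ generates, for $t=0,1,2,\dots$: $S^t=\mathrm{largest}_k(\mathcal{X}^t)$; $x^t_i=0$ for $i\notin S^t$ and $x^t_{S^t}=A_{S^t}^\dagger y$; $\mathcal{X}^{t+1}=\mathcal{X}^t-\eta A^T(Ax^t-y)$. When run for $N$ iterations (computing $x^0,\dots,x^{N-1}$), SEA outputs $x^{t_{BEST}}$ with $t_{BEST}\in\arg\min_{t'\in\{0,\dots,N-1\}}\|Ax^{t'}-y\|_2$. *)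

(* Defs.v *)
From HB Require Import structures.
From mathcomp Require Import all_boot all_order all_algebra.
From mathcomp Require Import boolp classical_sets reals.
Set Implicit Arguments. Unset Strict Implicit. Unset Printing Implicit Defensive.
Import Order.TTheory GRing.Theory Num.Theory.
Local Open Scope ring_scope.

Section SEA.
Variable R : realType.

Definition norm2 {p : nat} (v : 'cV[R]_p) : R := Num.sqrt (\sum_i (v i 0) ^+ 2).

Definition supp {p : nat} (v : 'cV[R]_p) : {set 'I_p} := [set i | v i 0 != 0].

(* min_{i in supp x} |x_i| ; the seed norm2 x bounds every |x_i|, so for a
   nonzero x this is exactly the minimum over the support *)
Definition min_supp {p : nat} (v : 'cV[R]_p) : R :=
  \big[Num.min/norm2 v]_(i | v i 0 != 0) `|v i 0|.

Definition rip_ineq {m n : nat} (A : 'M[R]_(m, n)) (l : nat) (d : R) :=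
  forall x : 'cV[R]_n, (#|supp x| <= l)%N ->
    (1 - d) * norm2 x ^+ 2 <= norm2 (A *m x) ^+ 2 <= (1 + d) * norm2 x ^+ 2.

Definition is_ric {m n : nat} (A : 'M[R]_(m, n)) (l : nat) (d : R) :=
  [/\ 0 <= d, rip_ineq A l d & forall d', 0 <= d' -> rip_ineq A l d' -> d <= d'].

Definition alpha_rip (dk d2k d2k1 : R) : R := d2k1 * (1 + d2k / (1 - dk)).
Definition gamma_rip (dk d2k1 : R) : R := 1 + d2k1 * Num.sqrt (1 + dk) / (1 - dk).

(* largest_k(v): indices of the k entries of largest absolute value,
   ties broken in favour of the highest indices: i is selected iff fewer
   than k indices j beat i, where j beats i iff |v_j| > |v_i|, or
   |v_j| = |v_i| and j > i. *)
Definition largest {n : nat} (k : nat) (v : 'cV[R]_n) : {set 'I_n} :=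
  let beats (j i : 'I_n) : bool :=
    (`|v i 0| < `|v j 0|) || ((`|v j 0| == `|v i 0|) && (i < j)%N) in
  [set i | (#|[set j | beats j i]| < k)%N].

Definition penrose {p q : nat} (B : 'M[R]_(p, q)) (P : 'M[R]_(q, p)) : Prop :=
  [/\ B *m P *m B = B, P *m B *m P = P, (B *m P)^T = B *m P & (P *m B)^T = P *m B].

Definition pinv {p q : nat} (B : 'M[R]_(p, q)) : 'M[R]_(q, p) :=
  xget 0 [set P | penrose B P].

Definition colS {m n : nat} (A : 'M[R]_(m, n)) (S : {set 'I_n}) : 'M[R]_(m, #|S|) :=
  colsub (fun j : 'I_#|S| => enum_val j) A.

Definition sea_x {m n : nat} (A : 'M[R]_(m, n)) (y : 'cV[R]_m) (S : {set 'I_n})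
  : 'cV[R]_n :=
  let v := pinv (colS A S) *m y in
  \col_i \sum_(j < #|S| | enum_val j == i) v j 0.

Definition sea_S {n : nat} (k : nat) (X : 'cV[R]_n) : {set 'I_n} := largest k X.

Fixpoint sea_X {m n : nat} (A : 'M[R]_(m, n)) (y : 'cV[R]_m) (k : nat) (eta : R)
  (X0 : 'cV[R]_n) (t : nat) : 'cV[R]_n :=
  match t with
  | 0 => X0
  | t'.+1 => let X := sea_X A y k eta X0 t' in
             X - eta *: (A^T *m (A *m sea_x A y (sea_S k X) - y))
  end.

Definition sea_St {m n : nat} A y k eta X0 t : {set 'I_n} :=
  sea_S k (@sea_X m n A y k eta X0 t).
Definition sea_xt {m n : nat} A y k eta X0 t : 'cV[R]_n :=
  @sea_x m n A y (sea_St A y k eta X0 t).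

End SEA.

(* Main.v *)
Require Import Defs.
From HB Require Import structures.
From mathcomp Require Import all_boot all_order all_algebra.
From mathcomp Require Import boolp classical_sets reals.
From mathcomp Require Import ring lra.
Import Order.TTheory GRing.Theory Num.Theory.
Local Open Scope ring_scope.

Definition dot {R : realType} {p : nat} (u v : 'cV[R]_p) : R := \sum_i u i 0 * v i 0.

Definition supported {R : realType} {p : nat} (v : 'cV[R]_p) (U : {set 'I_p}) :=
  forall i, i \notin U -> v i 0 = 0.

Lemma dot_ge0 {R : realType} {p : nat} (u : 'cV[R]_p) : 0 <= dot u u.
Proof. by apply: sumr_ge0 => i _; rewrite -expr2 sqr_ge0. Qed.

Lemma norm2_sq {R : realType} {p : nat} (u : 'cV[R]_p) : norm2 u ^+ 2 = dot u u.
Proof.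
rewrite /norm2 sqr_sqrtr; last by apply: sumr_ge0 => i _; rewrite sqr_ge0.
by rewrite /dot; apply: eq_bigr => i _; rewrite expr2.
Qed.

Lemma norm2_ge0 {R : realType} {p : nat} (u : 'cV[R]_p) : 0 <= norm2 u.
Proof. exact: sqrtr_ge0. Qed.

Lemma dotC {R : realType} {p : nat} (u v : 'cV[R]_p) : dot u v = dot v u.
Proof. by apply: eq_bigr => i _; rewrite mulrC. Qed.

Lemma dotDr {R : realType} {p : nat} (u v w : 'cV[R]_p) : dot u (v + w) = dot u v + dot u w.
Proof. by rewrite /dot -big_split; apply: eq_bigr => i _; rewrite !mxE mulrDr. Qed.

Lemma dotZr {R : realType} {p : nat} a (u v : 'cV[R]_p) : dot u (a *: v) = a * dot u v.
Proof. by rewrite /dot mulr_sumr; apply: eq_bigr => i _; rewrite !mxE mulrCA. Qed.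

Lemma dotNr {R : realType} {p : nat} (u v : 'cV[R]_p) : dot u (- v) = - dot u v.
Proof. by rewrite -scaleN1r dotZr mulN1r. Qed.

Lemma dotBr {R : realType} {p : nat} (u v w : 'cV[R]_p) : dot u (v - w) = dot u v - dot u w.
Proof. by rewrite dotDr dotNr. Qed.

Lemma dotDl {R : realType} {p : nat} (u v w : 'cV[R]_p) : dot (v + w) u = dot v u + dot w u.
Proof. by rewrite dotC dotDr !(dotC u). Qed.

Lemma dotZl {R : realType} {p : nat} a (u v : 'cV[R]_p) : dot (a *: v) u = a * dot v u.
Proof. by rewrite dotC dotZr dotC. Qed.

Lemma dotNl {R : realType} {p : nat} (u v : 'cV[R]_p) : dot (- v) u = - dot v u.
Proof. by rewrite dotC dotNr dotC. Qed.

Lemma dotBl {R : realType} {p : nat} (u v w : 'cV[R]_p) : dot (v - w) u = dot v u - dot w u.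
Proof. by rewrite dotDl dotNl. Qed.

Lemma dot0r {R : realType} {p : nat} (u : 'cV[R]_p) : dot u 0 = 0.
Proof. by rewrite /dot big1 // => i _; rewrite mxE mulr0. Qed.

Lemma dot0l {R : realType} {p : nat} (u : 'cV[R]_p) : dot 0 u = 0.
Proof. by rewrite dotC dot0r. Qed.

Lemma dot_eq0 {R : realType} {p : nat} (u : 'cV[R]_p) : dot u u = 0 -> u = 0.
Proof.
move=> H; apply/matrixP => i j; rewrite (ord1 j) mxE.
have E : \sum_l (u l 0) ^+ 2 = dot u u by apply: eq_bigr => l _; rewrite expr2.
rewrite H in E.
have := @psumr_eq0P _ _ _ (fun l => u l 0 ^+ 2) (fun l _ => sqr_ge0 (u l 0)) E i isT.
by move/eqP; rewrite sqrf_eq0 => /eqP.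
Qed.

Lemma norm2_eq0 {R : realType} {p : nat} (u : 'cV[R]_p) : norm2 u = 0 -> u = 0.
Proof. by move=> H; apply: dot_eq0; rewrite -norm2_sq H expr2 mulr0. Qed.

Lemma norm2_0 {R : realType} {p : nat} : norm2 (0 : 'cV[R]_p) = 0.
Proof. by rewrite /norm2 big1 ?sqrtr0 // => i _; rewrite mxE expr2 mulr0. Qed.

Lemma supp_supported {R : realType} {p : nat} (v : 'cV[R]_p) U : supported v U -> supp v \subset U.
Proof.
move=> H; apply/fintype.subsetP => i; rewrite inE; apply: contraR => Hi.
by rewrite H // eqxx.
Qed.

Lemma supported_disj_dot {R : realType} {p : nat} (u v : 'cV[R]_p) U V :
  supported u U -> supported v V -> [disjoint U & V] -> dot u v = 0.
Proof.
move=> Hu Hv D; rewrite /dot big1 // => i _.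
case: (boolP (i \in U)) => iU; last by rewrite Hu // mul0r.
have iV : i \notin V by rewrite (disjointFr D iU).
by rewrite Hv // mulr0.
Qed.

Arguments supp_supported {R p v U}.
Arguments supported_disj_dot {R p u v U V}.

Lemma dot_quad {R : realType} {p : nat} (a b : R) (X Y : 'cV[R]_p) :
  dot (a *: X + b *: Y) (a *: X + b *: Y) =
  a ^+ 2 * dot X X + 2 * a * b * dot X Y + b ^+ 2 * dot Y Y.
Proof.
rewrite !dotDl !dotDr !dotZl !dotZr (dotC Y X); ring.
Qed.

Lemma mulmx_lin {R : realType} {m n : nat} (A : 'M[R]_(m, n)) a b (u v : 'cV[R]_n) :
  A *m (a *: u + b *: v) = a *: (A *m u) + b *: (A *m v).
Proof. by rewrite mulmxDr !scalemxAr. Qed.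

Lemma rip_dot1 {R : realType} {m n : nat} (A : 'M[R]_(m, n)) l d (u v : 'cV[R]_n) U V :
  rip_ineq A l d -> supported u U -> supported v V -> [disjoint U & V] ->
  (#|U :|: V| <= l)%N ->
  dot (A *m u) (A *m v) <= d * norm2 u * norm2 v.
Proof.
move=> H Hu Hv D Hl.
have supz : forall a (s : R), supported (a *: u + s *: v) (U :|: V).
  move=> a s i; rewrite finset.in_setU negb_or => /andP [iU iV].
  by rewrite !mxE Hu // Hv // !mulr0 addr0.
have cz : forall a s, (#|supp (a *: u + s *: v)| <= l)%N.
  move=> a s; have := subset_leq_card (supp_supported (supz a s)); move=> h; exact: (leq_trans h Hl).
have duv : dot u v = 0 := supported_disj_dot Hu Hv D.
case: (eqVneq u 0) => [->|u0]; first by rewrite mulmx0 dot0l norm2_0 mulr0 mul0r.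
case: (eqVneq v 0) => [->|v0]; first by rewrite mulmx0 dot0r norm2_0 mulr0.
have nu : 0 < norm2 u.
  rewrite lt_neqAle norm2_ge0 andbT; apply/eqP => /esym /norm2_eq0 /eqP.
  by rewrite (negbTE u0).
have nv : 0 < norm2 v.
  rewrite lt_neqAle norm2_ge0 andbT; apply/eqP => /esym /norm2_eq0 /eqP.
  by rewrite (negbTE v0).
set lam := norm2 v / norm2 u.
have lamnu : lam * norm2 u = norm2 v by rewrite /lam mulfVK // gt_eqF.
have lam0 : 0 < lam by rewrite /lam divr_gt0.
have /andP [_ E1] := H (lam *: u + 1 *: v) (cz _ _).
have /andP [E2 _] := H (lam *: u + (-1) *: v) (cz _ _).
rewrite !norm2_sq !mulmx_lin !dot_quad duv -!norm2_sq in E1 E2.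
set P := dot (A *m u) (A *m u) in E1 E2.
set Q := dot (A *m v) (A *m v) in E1 E2.
set Dd := dot (A *m u) (A *m v) in E1 E2 *.
have K : 4 * lam * Dd <= 4 * d * norm2 v ^+ 2.
  have : lam ^+ 2 * norm2 u ^+ 2 = norm2 v ^+ 2 by rewrite -exprMn lamnu.
  move=> e; rewrite e !expr1n !mulr1 !mulr0 !addr0 sqrrN expr1n !mul1r in E1 E2.
  rewrite mulrN1 in E2; lra.
have K2 : 4 * norm2 v * Dd <= 4 * d * norm2 v ^+ 2 * norm2 u.
  have : 0 <= norm2 u * (4 * d * norm2 v ^+ 2 - 4 * lam * Dd).
    by apply: mulr_ge0; [exact: norm2_ge0 | lra].
  rewrite -lamnu; nra.
nra.
Qed.

Arguments rip_dot1 {R m n A l d u v U V}.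

Lemma rip_dot {R : realType} {m n : nat} (A : 'M[R]_(m, n)) l d (u v : 'cV[R]_n) U V :
  rip_ineq A l d -> supported u U -> supported v V -> [disjoint U & V] ->
  (#|U :|: V| <= l)%N ->
  `|dot (A *m u) (A *m v)| <= d * norm2 u * norm2 v.
Proof.
move=> H Hu Hv D Hl.
have Hv' : supported (- v) V by move=> i iV; rewrite mxE Hv // oppr0.
have n' : norm2 (- v) = norm2 v.
  by rewrite /norm2; congr Num.sqrt; apply: eq_bigr => i _; rewrite mxE sqrrN.
have := rip_dot1 H Hu Hv' D Hl; rewrite n' mulmxN dotNr => h1.
have := rip_dot1 H Hu Hv D Hl => h2.
rewrite ler_norml h2 andbT; lra.
Qed.

Arguments rip_dot {R m n A l d u v U V}.

Definition embed {R : realType} {n : nat} (S : {set 'I_n}) (v : 'cV[R]_#|S|) : 'cV[R]_n :=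
  \col_i \sum_(j < #|S| | enum_val j == i) v j 0.

Lemma sea_xE {R : realType} {m n : nat} (A : 'M[R]_(m, n)) y S :
  sea_x A y S = embed S (pinv (colS A S) *m y).
Proof. by []. Qed.

Lemma embed_supported {R : realType} {n : nat} (S : {set 'I_n}) (v : 'cV[R]_#|S|) :
  supported (embed S v) S.
Proof.
move=> i iS; rewrite mxE big_pred0 // => j; apply/negP => /eqP E.
by move: iS; rewrite -E enum_valP.
Qed.

Lemma embed_val {R : realType} {n : nat} (S : {set 'I_n}) (v : 'cV[R]_#|S|) j :
  embed S v (enum_val j) 0 = v j 0.
Proof.
rewrite mxE (big_pred1 j) // => j' /=.
by apply/eqP/eqP => [/enum_val_inj|->].
Qed.

Lemma mul_embed {R : realType} {m n : nat} (A : 'M[R]_(m, n)) (S : {set 'I_n}) (v : 'cV[R]_#|S|) :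
  A *m embed S v = colS A S *m v.
Proof.
apply/matrixP => r c; rewrite !mxE.
under eq_bigr => i _ do rewrite mxE big_distrr /= big_mkcond /=.
rewrite exchange_big /=; apply: eq_bigr => j _.
rewrite (bigD1 (enum_val j)) //= eqxx big1 ?addr0; last first.
  by move=> i /negPf; rewrite eq_sym => ->.
by rewrite !mxE (ord1 c).
Qed.

Lemma embed_of_supported {R : realType} {n : nat} (S : {set 'I_n}) (z : 'cV[R]_n) :
  supported z S -> z = embed S (\col_j z (enum_val j) 0).
Proof.
move=> Hz; apply/matrixP => i c; rewrite (ord1 c).
case: (boolP (i \in S)) => iS; last by rewrite Hz // embed_supported.
have -> : i = enum_val (enum_rank_in iS i) by rewrite enum_rankK_in.
by rewrite embed_val mxE.
Qed.

Arguments embed_of_supported {R n S z}.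

Lemma dot_mx {R : realType} {p : nat} (u v : 'cV[R]_p) : dot u v = (u^T *m v) 0 0.
Proof. by rewrite mxE; apply: eq_bigr => i _; rewrite mxE. Qed.

Lemma colS_inj {R : realType} {m n : nat} (A : 'M[R]_(m, n)) l d (S : {set 'I_n}) (v : 'cV[R]_#|S|) :
  rip_ineq A l d -> d < 1 -> (#|S| <= l)%N -> colS A S *m v = 0 -> v = 0.
Proof.
move=> H d1 Sl Bv.
have c : (#|supp (embed S v)| <= l)%N.
  exact: leq_trans (subset_leq_card (supp_supported (embed_supported S v))) Sl.
have /andP [E _] := H _ c.
rewrite mul_embed Bv norm2_0 expr0n /= norm2_sq in E.
have E0 : dot (embed S v) (embed S v) = 0.
  have := dot_ge0 (embed S v); nra.
have /dot_eq0 E1 := E0.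
apply/matrixP => j c'; rewrite (ord1 c') -embed_val E1 !mxE //.
Qed.

Arguments colS_inj {R m n A l d S v}.

Lemma pinv_penrose {R : realType} {m n : nat} (A : 'M[R]_(m, n)) l d (S : {set 'I_n}) :
  rip_ineq A l d -> d < 1 -> (#|S| <= l)%N -> penrose (colS A S) (pinv (colS A S)).
Proof.
move=> H d1 Sl; set B := colS A S.
set G := B^T *m B.
have GT : G^T = G by rewrite /G trmx_mul trmxK.
have Gu : G \in unitmx.
  rewrite -row_free_unit; apply: inj_row_free => v vG.
  have Gw : G *m v^T = 0 by rewrite -GT -trmx_mul vG trmx0.
  have : dot (B *m v^T) (B *m v^T) = 0.
    by rewrite dot_mx trmx_mul -mulmxA (mulmxA B^T) -/G Gw mulmx0 mxE.
  move/dot_eq0 => /(colS_inj H d1 Sl) /(congr1 trmx); rewrite trmxK trmx0 => //.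
rewrite /pinv; apply: (@xgetPex _ 0 [set P | penrose B P]).
exists (invmx G *m B^T); rewrite /penrose.
have PB : invmx G *m B^T *m B = 1%:M by rewrite -mulmxA -/G mulVmx.
split.
- by rewrite -mulmxA PB mulmx1.
- by rewrite PB mul1mx.
- by rewrite !trmx_mul trmxK trmx_inv GT mulmxA.
- by rewrite PB trmx1.
Qed.

Arguments pinv_penrose {R m n A l d S}.

Lemma normal_eq {R : realType} {m n : nat} (A : 'M[R]_(m, n)) l d (S : {set 'I_n}) y z :
  rip_ineq A l d -> d < 1 -> (#|S| <= l)%N -> supported z S ->
  dot (A *m z) (A *m sea_x A y S - y) = 0.
Proof.
move=> H d1 Sl Hz.
have [P1 _ P3 _] := pinv_penrose H d1 Sl.
set B := colS A S in P1 P3 *; set P := pinv B in P1 P3 *.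
rewrite (embed_of_supported Hz) sea_xE !mul_embed -/B -/P.
set z' := \col_j z (enum_val j) 0.
have BT : B^T *m (B *m P) = B^T by rewrite -P3 -trmx_mul P1.
have E : B^T *m (B *m (P *m y) - y) = 0.
  by rewrite mulmxBr (mulmxA B) (mulmxA B^T) BT subrr.
by rewrite dot_mx trmx_mul -mulmxA E mulmx0 mxE.
Qed.

Arguments normal_eq {R m n A l d S} y {z}.

Lemma sea_x_supported {R : realType} {m n : nat} (A : 'M[R]_(m, n)) y S :
  supported (sea_x A y S) S.
Proof. rewrite sea_xE; exact: embed_supported. Qed.

Definition restr {R : realType} {n : nat} (T : {set 'I_n}) (v : 'cV[R]_n) : 'cV[R]_n :=
  \col_i (if i \in T then v i 0 else 0).

Lemma restr_supported {R : realType} {n : nat} (T : {set 'I_n}) (v : 'cV[R]_n) :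
  supported (restr T v) T.
Proof. by move=> i iT; rewrite mxE (negbTE iT). Qed.

Lemma restr_norm {R : realType} {n : nat} (T : {set 'I_n}) (v : 'cV[R]_n) :
  norm2 (restr T v) <= norm2 v.
Proof.
rewrite /norm2 ler_sqrt; last by apply: sumr_ge0 => i _; rewrite sqr_ge0.
apply: ler_sum => i _; rewrite mxE; case: ifP => // _.
by rewrite expr0n /= sqr_ge0.
Qed.

Lemma card_U {n : nat} (A B : {set 'I_n}) : (#|A :|: B| <= #|A| + #|B|)%N.
Proof. exact: (leq_card_setU A B).1. Qed.

Lemma delta_supported {R : realType} {n : nat} (j : 'I_n) :
  supported (delta_mx j 0 : 'cV[R]_n) [set j].
Proof. by move=> i; rewrite finset.in_set1 mxE => /negPf ->. Qed.

Lemma delta_norm {R : realType} {n : nat} (j : 'I_n) : norm2 (delta_mx j 0 : 'cV[R]_n) = 1.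
Proof.
rewrite /norm2 (bigD1 j) //= big1 ?addr0; last first.
  by move=> i /negPf; rewrite mxE => ->; rewrite expr0n.
by rewrite mxE !eqxx expr1n sqrtr1.
Qed.

Lemma grad_facts {R : realType} {m n : nat} (A : 'M[R]_(m, n)) (xs : 'cV[R]_n)
  (dk d2k d2k1 : R) (k : nat) (S : {set 'I_n}) :
  (#|S| <= k)%N -> (#|supp xs| <= k)%N ->
  rip_ineq A k dk -> rip_ineq A k.*2 d2k -> rip_ineq A k.*2.+1 d2k1 ->
  0 <= dk -> dk < 1 -> 0 <= d2k -> 0 <= d2k1 ->
  (forall i : 'I_n, norm2 (col i A) = 1) ->
  let y := A *m xs in
  let r := A *m sea_x A y S - y in
  let a := alpha_rip dk d2k d2k1 * norm2 xs in
  [/\ (forall j, j \in S -> dot (col j A) r = 0),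
      (forall j, j \notin S -> j \notin supp xs -> `|dot (col j A) r| <= a),
      (forall i, i \notin S -> i \in supp xs -> `|- dot (col i A) r - xs i 0| <= a) &
      (supp xs \subset S -> r = 0)].
Proof.
move=> Sk sk Hk H2k H2k1 dk0 dk1 d2k0 d2k10 Hcol y r a.
set x := sea_x A y S.
set T := supp xs :\: S.
set w := x - restr S xs.
set u := restr T xs.
have ws : supported w S.
  move=> i iS; have := sea_x_supported A y S i iS; rewrite -/x => h.
  by rewrite mxE h /restr !mxE (negbTE iS) subrr.
have us : supported u T := restr_supported T xs.
have dST : [disjoint S & T].
  by rewrite disjoint_subset; apply/fintype.subsetP => i iS; by rewrite !inE iS.
have xxs : x - xs = w - u.
  apply/matrixP => i c; rewrite (ord1 c) /u /w /restr !mxE /T !inE.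
  case: (boolP (i \in S)) => iS /=; first by rewrite subr0.
  case: (eqVneq (xs i 0) 0) => [->|h]; first by rewrite ?eqxx ?subr0.
  by rewrite ?h ?subr0 /=.
have rE : r = A *m w - A *m u by rewrite /r /y -mulmxBr xxs mulmxBr.
have NE : forall z, supported z S -> dot (A *m z) r = 0.
  by move=> z zs; apply: (normal_eq y Hk dk1 Sk zs).
have Tk : (#|T| <= k)%N := leq_trans (subset_leq_card (subsetDl _ _)) sk.
have Aw : dot (A *m w) (A *m w) = dot (A *m w) (A *m u).
  by have := NE w ws; rewrite rE dotBr => /eqP; rewrite subr_eq0 => /eqP.
have wk : (#|supp w| <= k)%N := leq_trans (subset_leq_card (supp_supported ws)) Sk.
have /andP [L1 _] := Hk w wk.
rewrite !norm2_sq in L1.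
have L2 : `|dot (A *m w) (A *m u)| <= d2k * norm2 w * norm2 u.
  apply: (rip_dot H2k ws us dST); apply: leq_trans (card_U S T) _.
  by rewrite -addnn leq_add.
have nw0 := norm2_ge0 w; have nu0 := norm2_ge0 u.
have wb : (1 - dk) * norm2 w <= d2k * norm2 u.
  have e : (1 - dk) * norm2 w ^+ 2 <= d2k * norm2 w * norm2 u.
    rewrite norm2_sq; apply: le_trans L1 _; rewrite Aw; apply: le_trans L2.
    exact: ler_norm.
  case: (eqVneq (norm2 w) 0) => [->|nz]; first by rewrite mulr0; nra.
  have wp : 0 < norm2 w by rewrite lt_neqAle eq_sym nz nw0.
  nra.
have unx : norm2 u <= norm2 xs := restr_norm T xs.
have wb' : norm2 w <= d2k / (1 - dk) * norm2 xs.
  rewrite mulrAC ler_pdivlMr ?subr_gt0 // mulrC; apply: le_trans wb _.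
  by apply: ler_wpM2l.
have al : a = d2k1 * norm2 xs + d2k1 * (d2k / (1 - dk) * norm2 xs).
  by rewrite /a /alpha_rip; ring.
have nxs0 := norm2_ge0 xs.
have dd0 : 0 <= d2k / (1 - dk) by rewrite divr_ge0 // subr_ge0 ltW.
have gE : forall j, dot (col j A) r =
    dot (A *m delta_mx j 0) (A *m w) - dot (A *m delta_mx j 0) (A *m u).
  by move=> j; rewrite colE rE dotBr.
split.
- move=> j jS; rewrite colE; apply: NE => i iS; rewrite mxE.
  case: (eqVneq i j) => [e|ne]; first by move: iS; rewrite e jS.
  by [].
- move=> j jS jx; rewrite gE.
  have c1 : (#|[set j] :|: S| <= k.*2.+1)%N.
    apply: leq_trans (card_U _ _) _; rewrite cards1 add1n ltnS -addnn.
    exact: leq_trans Sk (leq_addr _ _).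
  have c2 : (#|[set j] :|: T| <= k.*2.+1)%N.
    apply: leq_trans (card_U _ _) _; rewrite cards1 add1n ltnS -addnn.
    exact: leq_trans Tk (leq_addr _ _).
  have jT : j \notin T by rewrite /T inE negb_and jx orbT.
  have h1 := rip_dot H2k1 (delta_supported j) ws (introT idP (etrans (disjoints1 S j) (introT idP jS))) c1.
  have h2 := rip_dot H2k1 (delta_supported j) us (introT idP (etrans (disjoints1 T j) (introT idP jT))) c2.
  rewrite delta_norm mulr1 in h1 h2.
  apply: le_trans (ler_normB _ _) _.
  have : d2k1 * norm2 w <= d2k1 * (d2k / (1 - dk) * norm2 xs) by apply: ler_wpM2l.
  have : d2k1 * norm2 u <= d2k1 * norm2 xs by apply: ler_wpM2l.
  lra.
- move=> i iS ix.
  set T' := T :\ i.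
  set u' := restr T' xs.
  have uE : u = xs i 0 *: delta_mx i 0 + u'.
    apply/matrixP => l c; rewrite (ord1 c) /u /u' /restr !mxE /T' /T !inE.
    case: (eqVneq l i) => [->|li] /=.
      have ix2 : xs i 0 != 0 by move: ix; rewrite /supp finset.in_set.
      by rewrite iS ix2 mulr1 addr0.
    by rewrite mulr0 add0r.
  have T'k : (#|T'| <= k)%N := leq_trans (subset_leq_card (subsetDl _ _)) Tk.
  have c1 : (#|[set i] :|: S| <= k.*2.+1)%N.
    apply: leq_trans (card_U _ _) _; rewrite cards1 add1n ltnS -addnn.
    exact: leq_trans Sk (leq_addr _ _).
  have c2 : (#|[set i] :|: T'| <= k.*2.+1)%N.
    apply: leq_trans (card_U _ _) _; rewrite cards1 add1n ltnS -addnn.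
    exact: leq_trans T'k (leq_addr _ _).
  have iT' : i \notin T' by rewrite /T' !inE eqxx.
  have h1 := rip_dot H2k1 (delta_supported i) ws (introT idP (etrans (disjoints1 S i) (introT idP iS))) c1.
  have h2 := rip_dot H2k1 (delta_supported i) (restr_supported T' xs)
    (introT idP (etrans (disjoints1 T' i) (introT idP iT'))) c2.
  rewrite delta_norm mulr1 in h1 h2.
  have u'x : norm2 u' <= norm2 xs := restr_norm T' xs.
  have ee : dot (A *m delta_mx i 0) (A *m delta_mx i 0) = 1.
    by rewrite -colE -norm2_sq Hcol expr1n.
  rewrite gE uE (mulmxDr A (xs i 0 *: delta_mx i 0) u') -scalemxAr dotDr dotZr ee mulr1.
  set p := dot (A *m delta_mx i 0) (A *m w) in h1 *.
  set q := dot (A *m delta_mx i 0) (A *m u') in h2 *.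
  have -> : - (p - (xs i 0 + q)) - xs i 0 = q - p by ring.
  apply: le_trans (ler_normB _ _) _.
  have : d2k1 * norm2 w <= d2k1 * (d2k / (1 - dk) * norm2 xs) by apply: ler_wpM2l.
  have : d2k1 * norm2 u' <= d2k1 * norm2 xs by apply: ler_wpM2l.
  lra.
- move=> sub.
  have u0 : u = 0.
    apply/matrixP => i c; rewrite /u /restr !mxE /T !inE.
    case: (boolP (i \in S)) => iS //=.
    have : i \notin supp xs by apply: contra iS; apply: (fintype.subsetP sub).
    by rewrite /supp finset.in_set negbK => /eqP ->; case: ifP.
  have : dot (A *m w) (A *m w) = 0 by rewrite Aw u0 mulmx0 dot0r.
  by move/dot_eq0; rewrite rE u0 mulmx0 subr0.
Qed.

Definition beats {R : realType} {n : nat} (v : 'cV[R]_n) (j i : 'I_n) : bool :=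
  (`|v i 0| < `|v j 0|) || ((`|v j 0| == `|v i 0|) && (i < j)%N).

Definition Bset {R : realType} {n : nat} (v : 'cV[R]_n) (i : 'I_n) : {set 'I_n} :=
  [set j | beats v j i].

Lemma in_largest {R : realType} {n : nat} k (v : 'cV[R]_n) i :
  (i \in largest k v) = (#|Bset v i| < k)%N.
Proof. by rewrite /largest inE. Qed.

Lemma beats_irr {R : realType} {n : nat} (v : 'cV[R]_n) i : ~~ beats v i i.
Proof. by rewrite /beats ltxx ltnn andbF. Qed.

Lemma beats_le {R : realType} {n : nat} (v : 'cV[R]_n) j i :
  beats v j i -> `|v i 0| <= `|v j 0|.
Proof. by case/orP => [/ltW //| /andP [/eqP -> _]]. Qed.

Lemma beats_trans {R : realType} {n : nat} (v : 'cV[R]_n) l j i :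
  beats v l j -> beats v j i -> beats v l i.
Proof.
rewrite /beats => /orP [h1 | /andP [/eqP e1 h1]] /orP [h2 | /andP [/eqP e2 h2]].
- by rewrite (lt_trans h2 h1).
- by rewrite -e2 h1.
- by rewrite e1 h2.
- by rewrite e1 e2 eqxx (ltn_trans h2 h1) orbT.
Qed.

Lemma beats_total {R : realType} {n : nat} (v : 'cV[R]_n) i j :
  i != j -> beats v i j || beats v j i.
Proof.
move=> ij; rewrite /beats.
case: (ltgtP `|v j 0| `|v i 0|) => //= e.
rewrite orbC.
case: (ltngtP i j) => // /val_inj E; by move: ij; rewrite E eqxx.
Qed.

Lemma Bset_lt {R : realType} {n : nat} (v : 'cV[R]_n) j i :
  beats v j i -> (#|Bset v j| < #|Bset v i|)%N.
Proof.
move=> ji; apply: proper_card; apply/properP; split.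
  by apply/fintype.subsetP => l; rewrite !inE => lj; apply: beats_trans lj ji.
by exists j; rewrite !inE // beats_irr.
Qed.

Lemma largest_card {R : realType} {n : nat} k (v : 'cV[R]_n) :
  (#|largest k v| <= k)%N.
Proof.
set L := largest k v.
have U : uniq (map (fun i => #|Bset v i|) (enum L)).
  rewrite map_inj_in_uniq ?enum_uniq // => x y _ _ E.
  apply/eqP; apply: contraT => xy.
  case/orP: (beats_total v x y xy) => /Bset_lt; rewrite E ltnn //.
have := uniq_leq_size U (s2 := iota 0 k).
rewrite size_map size_iota -cardE; apply => z /mapP [x xL ->].
by rewrite mem_iota add0n /=; move: xL; rewrite mem_enum in_largest.
Qed.

Lemma largest_out {R : realType} {n : nat} k (v : 'cV[R]_n) (Sx : {set 'I_n}) i :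
  (#|Sx| <= k)%N -> i \in Sx -> i \notin largest k v ->
  exists2 j, j \notin Sx & `|v i 0| <= `|v j 0|.
Proof.
move=> Sk iS; rewrite in_largest -leqNgt => kB.
have : ~~ (Bset v i \subset Sx :\ i).
  apply/negP => /subset_leq_card; rewrite leqNgt; apply/negP; rewrite negbK.
  have := cardsD1 i Sx; rewrite iS add1n => e.
  by apply: leq_trans _ kB; apply: leq_trans _ Sk; rewrite e ltnS.
case/fintype.subsetPn => j jB jS.
exists j; last by apply: beats_le; move: jB; rewrite inE.
move: jS; rewrite !inE negb_and negbK; case/orP => // /eqP ji.
by move: jB; rewrite inE ji (negbTE (beats_irr _ _)).
Qed.

Lemma gradE {R : realType} {m n : nat} (A : 'M[R]_(m, n)) (r : 'cV[R]_m) j :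
  (A^T *m r) j 0 = dot (col j A) r.
Proof. by rewrite mxE; apply: eq_bigr => i _; rewrite !mxE. Qed.

Lemma rip_mono {R : realType} {m n : nat} (A : 'M[R]_(m, n)) l l' d :
  (l <= l')%N -> rip_ineq A l' d -> rip_ineq A l d.
Proof. by move=> ll H x hx; apply: H; apply: leq_trans hx ll. Qed.

Lemma min_supp_le {R : realType} {n : nat} (v : 'cV[R]_n) i :
  v i 0 != 0 -> min_supp v <= `|v i 0|.
Proof. move=> h; rewrite /min_supp; exact: (bigmin_le_cond (P := fun i => v i 0 != 0) (norm2 v) (fun i => `|v i 0|) h). Qed.

Lemma norm2_pos {R : realType} {n : nat} (v : 'cV[R]_n) i :
  v i 0 != 0 -> 0 < norm2 v.
Proof.
move=> h; rewrite lt_neqAle norm2_ge0 andbT; apply/eqP => /esym /norm2_eq0 v0.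
by move: h; rewrite v0 mxE eqxx.
Qed.

Lemma min_supp_pos {R : realType} {n : nat} (v : 'cV[R]_n) i :
  v i 0 != 0 -> 0 < min_supp v.
Proof.
move=> h; rewrite /min_supp; apply: lt_bigmin; first exact: norm2_pos h.
by move=> j hj; rewrite normr_gt0.
Qed.

Arguments min_supp_le {R n v i}.
Arguments norm2_pos {R n v i}.
Arguments min_supp_pos {R n v i}.

Lemma sea_X_succ {R : realType} {m n : nat} (A : 'M[R]_(m, n)) y k eta X0 t j :
  sea_X A y k eta X0 t.+1 j 0 =
  sea_X A y k eta X0 t j 0 - eta * dot (col j A) (A *m sea_xt A y k eta X0 t - y).
Proof. by rewrite /= [in LHS]mxE [in LHS]mxE [in LHS]mxE gradE. Qed.

Lemma final_contra {R : realType} (N K a c mn beta : R) :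
  N * c <= K * (a * N + c) -> c = mn - a -> 2 * K * a <= beta * mn ->
  1 <= K -> 0 <= a -> 0 < mn -> 0 <= N -> (K + 1) < N * (1 - beta) -> False.
Proof.
move=> h1 ec h3 K1 a0 m0 N0 h4; rewrite ec in h1.
have e1 : (K + 1) * a <= beta * mn by nra.
have e2 : N * ((K + 1) * a) <= N * (beta * mn) by apply: ler_wpM2l.
have e3 : N * (1 - beta) * mn <= K * mn by nra.
have e4 : N * (1 - beta) <= K by rewrite -(ler_pM2r m0).
lra.
Qed.

Theorem corollary4p2 (R : realType) (m n k : nat)
  (A : 'M[R]_(m, n)) (xs : 'cV[R]_n) (dk d2k d2k1 beta : R) :
  (0 < m)%N -> (0 < n)%N -> (0 < k)%N ->
  (k.*2.+1 <= n)%N ->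
  (1 <= #|supp xs| <= k)%N ->
  is_ric A k dk -> is_ric A k.*2 d2k -> is_ric A k.*2.+1 d2k1 ->
  d2k1 < 1 ->
  (forall i : 'I_n, norm2 (col i A) = 1) ->
  0 < beta < 1 ->
  (k.*2)%:R * alpha_rip dk d2k d2k1 * norm2 xs / min_supp xs <= beta ->
  let y := A *m xs in
  let e : 'cV[R]_m := 0 in
  gamma_rip dk d2k1 * norm2 e < min_supp xs / (k.*2)%:R - alpha_rip dk d2k d2k1 * norm2 xs
  /\
  (forall (eta : R) (N tb : nat), 0 < eta ->
     (k.+1)%:R / (1 - beta) < N%:R ->
     (tb < N)%N ->
     (forall t', (t' < N)%N ->
        norm2 (A *m sea_xt A y k eta 0 tb - y) <= norm2 (A *m sea_xt A y k eta 0 t' - y)) ->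
     supp xs \subset sea_St A y k eta 0 tb /\ sea_xt A y k eta 0 tb = xs).
Proof.
move=> m0 n0 k0 kn /andP [s1 sk] [dk0 Hk mink] [d2k0 H2k min2k] [d2k10 H2k1 min2k1]
  d1 Hcol /andP [b0 b1] Hb y e.
have dkle : dk <= d2k1.
  by apply: mink => //; apply: rip_mono H2k1; rewrite -addnn; apply: leqW; apply: leq_addr.
have d2kle : d2k <= d2k1.
  by apply: min2k => //; apply: rip_mono H2k1.
have dk1 : dk < 1 by apply: le_lt_trans d1.
have [i0 i0s] := card_gt0P s1.
have xi0 : xs i0 0 != 0 by move: i0s; rewrite /supp finset.in_set.
set mn := min_supp xs.
have mpos : 0 < mn := min_supp_pos xi0.
have nxpos : 0 < norm2 xs := norm2_pos xi0.
set al := alpha_rip dk d2k d2k1.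
have al0 : 0 <= al.
  rewrite /al /alpha_rip; apply: mulr_ge0 => //; apply: addr_ge0 => //.
  by apply: divr_ge0 => //; rewrite subr_ge0 ltW.
set a := al * norm2 xs.
have a0 : 0 <= a by apply: mulr_ge0 => //; exact: ltW.
set K : R := k%:R.
have K1 : 1 <= K by rewrite /K ler1n.
have k2E : (k.*2)%:R = 2 * K :> R by rewrite -addnn natrD /K; ring.
have Hb' : 2 * K * a <= beta * mn.
  by move: Hb; rewrite k2E ler_pdivrMr // -/al -/mn /a mulrA.
split.
  rewrite /e norm2_0 mulr0 k2E subr_gt0 ltr_pdivlMr; last lra.
  rewrite -/a; nra.
move=> eta N tb eta0 HN tbN tbmin.
set St := sea_St A y k eta 0.
set xt := sea_xt A y k eta 0.
set X := sea_X A y k eta 0.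
have Stk : forall t, (#|St t| <= k)%N by move=> t; exact: largest_card.
have G := fun t => @grad_facts R m n A xs dk d2k d2k1 k (St t) (Stk t) sk Hk H2k H2k1 dk0 dk1 d2k0 d2k10 Hcol.
case: (boolP [exists t : 'I_N, supp xs \subset St t]) => [/existsP [t0 Ht0] | /existsPn bad].
  have [_ _ _ G3] := G t0.
  have r0 : A *m xt t0 - y = 0 := G3 Ht0.
  have rtb : A *m xt tb - y = 0.
    apply: norm2_eq0; apply/eqP; rewrite eq_le norm2_ge0 andbT.
    by have := tbmin t0 (ltn_ord t0); rewrite -/xt r0 norm2_0.
  have xeq : xt tb = xs.
    set z := xt tb - xs.
    have Az : A *m z = 0 by rewrite /z mulmxBr -/y.
    have zs : supported z (St tb :|: supp xs).
      move=> i; rewrite finset.in_setU negb_or => /andP [i1 i2].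
      rewrite /z mxE (sea_x_supported A y (St tb) i i1).
      by move: i2; rewrite /supp finset.in_set negbK mxE => /eqP ->; rewrite oppr0 addr0.
    have zc : (#|supp z| <= k.*2.+1)%N.
      apply: leq_trans (subset_leq_card (supp_supported zs)) _.
      apply: leq_trans (card_U _ _) _; rewrite -addnn.
      exact: leq_trans (leq_add (Stk tb) sk) (leqnSn _).
    have /andP [L _] := H2k1 z zc.
    rewrite Az norm2_0 expr0n /= norm2_sq in L.
    have : dot z z = 0 by have := dot_ge0 z; nra.
    by move/dot_eq0/eqP; rewrite subr_eq0 => /eqP.
  split => //; rewrite -xeq; exact: supp_supported (sea_x_supported A y (St tb)).
exfalso.
pose cnt i t := (\sum_(s < t) (i \notin St s))%N.
have cntS : forall i t, cnt i t.+1 = (cnt i t + (i \notin St t))%N.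
  by move=> i t; rewrite /cnt big_ord_recr.
set c := mn - a.
have c0 : 0 <= c by rewrite /c; nra.
have X0 : forall j, X 0 j 0 = 0 by move=> j; rewrite /X /= mxE.
have XS : forall t j, X t.+1 j 0 = X t j 0 - eta * dot (col j A) (A *m xt t - y).
  by move=> t j; rewrite /X sea_X_succ.
have I1 : forall t j, j \notin supp xs -> `|X t j 0| <= eta * a * t%:R.
  elim => [|t IH] j hj; first by rewrite X0 normr0 mulr0.
  have [G0 G1 _ _] := G t.
  rewrite XS -natr1.
  case: (boolP (j \in St t)) => jS.
    rewrite G0 // mulr0 subr0; apply: le_trans (IH j hj) _; nra.
  have g1 : `|dot (col j A) (A *m xt t - y)| <= a := G1 j jS hj.
  apply: le_trans (ler_normB _ _) _; rewrite normrM (gtr0_norm eta0).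
  have := IH j hj; have := ler_wpM2l (ltW eta0) g1; lra.
have I2 : forall t i, i \in supp xs ->
    eta * c * (cnt i t)%:R * `|xs i 0| <= X t i 0 * xs i 0.
  elim => [|t IH] i hi; first by rewrite X0 mul0r /cnt big_ord0 mulr0n mulr0 mul0r.
  have [G0 _ G2 _] := G t.
  rewrite XS cntS natrD.
  case: (boolP (i \in St t)) => iS.
    by rewrite G0 // mulr0 subr0 addr0; apply: IH.
  have g2 := G2 i iS hi.
  have xi : xs i 0 != 0 by move: hi; rewrite /supp finset.in_set.
  have mle : mn <= `|xs i 0| := min_supp_le xi.
  set g := dot (col i A) (A *m xt t - y) in g2 *.
  set xi' := xs i 0 in g2 mle xi *.
  have h1 : - (g * xi') >= `|xi'| ^+ 2 - a * `|xi'|.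
    have e1 : - (g * xi') = xi' ^+ 2 + (- g - xi') * xi' by ring.
    have e2 : - ((- g - xi') * xi') <= a * `|xi'|.
      apply: le_trans (ler_norm _) _; rewrite normrN normrM.
      by apply: ler_wpM2r.
    rewrite e1 real_normK ?num_real //; lra.
  have h2 : `|xi'| * c <= `|xi'| ^+ 2 - a * `|xi'|.
    rewrite /c expr2; have := ler_wpM2l (normr_ge0 xi') mle; lra.
  have IHi : eta * c * (cnt i t)%:R * `|xi'| <= X t i 0 * xi' := IH i hi.
  have h3 : eta * (`|xi'| * c) <= eta * (- (g * xi')).
    apply: ler_wpM2l; [exact: ltW | exact: le_trans h2 h1].
  rewrite /=; lra.
have I3 : forall t i, i \in supp xs -> (cnt i t)%:R * c <= a * t%:R + c.
  elim => [|t IH] i hi; first by rewrite /cnt big_ord0 mul0r mulr0 add0r.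
  rewrite cntS natrD -natr1.
  case: (boolP (i \in St t)) => iS.
    rewrite /= addr0; apply: le_trans (IH i hi) _; nra.
  have [j js jle] := largest_out k (X t) (supp xs) i sk hi iS.
  have xi : xs i 0 != 0 by move: hi; rewrite /supp finset.in_set.
  have xip : 0 < `|xs i 0| by rewrite normr_gt0.
  have h1 := I1 t j js.
  have h2 := I2 t i hi.
  have h3 : X t i 0 * xs i 0 <= `|X t i 0| * `|xs i 0|.
    by rewrite -normrM; apply: ler_norm.
  have h4 : (eta * `|xs i 0|) * (c * (cnt i t)%:R) <= (eta * `|xs i 0|) * (a * t%:R).
    have : `|X t i 0| * `|xs i 0| <= eta * a * t%:R * `|xs i 0|.
      by apply: ler_wpM2r; [exact: ltW | exact: le_trans jle h1].
    nra.
  rewrite ler_pM2l in h4; last exact: mulr_gt0.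
  rewrite /=; nra.
have I4 : forall t, (t <= N)%N -> (t <= \sum_(i in supp xs) cnt i t)%N.
  elim => [|t IH] tN; first by [].
  have tN' : (t < N)%N := tN.
  have /fintype.subsetPn [i1 i1s i1S] := bad (Ordinal tN').
  rewrite (eq_bigr (fun i => cnt i t + (i \notin St t))%N); last by move=> i _; rewrite cntS.
  have i1S' : i1 \notin St t := i1S.
  rewrite big_split /= [X in (_ + X)%N](bigD1 i1) //= i1S'.
  have IH' := IH (ltnW tN).
  by rewrite addnA addn1 addSn ltnS (leq_trans IH') // leq_addr.
have := I4 N (leqnn N).
rewrite -(ler_nat R) natr_sum => hN.
have hN2 : N%:R * c <= \sum_(i in supp xs) (cnt i N)%:R * c.
  by rewrite -mulr_suml; apply: ler_wpM2r.
have hN3 : \sum_(i in supp xs) (cnt i N)%:R * c <= \sum_(i in supp xs) (a * N%:R + c).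
  by apply: ler_sum => i hi; apply: I3.
rewrite sumr_const -(mulr_natl (a * N%:R + c)) in hN3.
have hK : (#|supp xs|)%:R <= K by rewrite /K ler_nat.
have hN4 : N%:R * c <= K * (a * N%:R + c).
  have pos : 0 <= a * N%:R + c by apply: addr_ge0 => //; apply: mulr_ge0.
  apply: le_trans hN2 _; apply: le_trans hN3 _; apply: (ler_wpM2r pos); by rewrite /K ler_nat.
apply: (@final_contra R N%:R K a c mn beta hN4 erefl Hb' K1 a0 mpos (ler0n _ _)).
move: HN; rewrite ltr_pdivrMr ?subr_gt0 // -natr1 -/K; lra.
Qed.
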